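(* For an arbitrary channel $W:\mathcal{X}\to\mathcal{Y}$ with $\mathcal{Y}$ finite, any block length $n$, any $0<\delta\le\sqrt{n}\log|\mathcal{Y}|$ and any $x^n\in\mathcal{X}^n$, \[ W_{x^n}(\mathcal{T}^\delta_{x^n})\ge1-2\exp\!\left(-\delta^2/36K(|\mathcal{Y}|)\right). \]
   Context: A channel $W:\mathcal{X}\to\mathcal{Y}$ ($\mathcal{X}$ measurable space) is a measurable map $x\mapsto W_x\in\mathcal{P}(\mathcal{Y})$; $W_{x^n}(y^n)=\prod_{i=1}^nW_{x_i}(y_i)$. Logarithms and exponentials are base 2; $H$ is Shannon entropy. The conditional typical set is $\mathcal{T}^\delta_{x^n}=\{y^n\in\mathcal{Y}^n:|\log W_{x^n}(y^n)+H(W_{x^n})|\le\delta\sqrt{n}\}$, and $K(d)=(\log\max\{d,3\})^2$. *)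

(* Defs.v *)
From HB Require Import structures.
From mathcomp Require Import all_boot all_order all_algebra.
From mathcomp Require Import all_classical all_reals all_analysis.
Set Implicit Arguments. Unset Strict Implicit. Unset Printing Implicit Defensive.
Import Order.TTheory GRing.Theory Num.Theory.
Local Open Scope ring_scope.

Section Defs.
Variable R : realType.

Definition log2 (x : R) : R := ln x / ln 2.
Definition exp2 (x : R) : R := 2 `^ x.

Definition is_pmf (Y : finType) (P : Y -> R) : Prop :=
  (forall y, 0 <= P y) /\ \sum_(y : Y) P y = 1.

Definition entropy (Y : finType) (P : Y -> R) : R :=
  - \sum_(y : Y) (if P y == 0 then 0 else P y * log2 (P y)).

Definition prodW (X : Type) (Y : finType) (W : X -> Y -> R) (n : nat)
  (xn : 'I_n -> X) (yn : {ffun 'I_n -> Y}) : R :=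
  \prod_(i < n) W (xn i) (yn i).

Definition typical_set (X : Type) (Y : finType) (W : X -> Y -> R) (n : nat)
  (delta : R) (xn : 'I_n -> X) : {set {ffun 'I_n -> Y}} :=
  [set yn | `| log2 (prodW W xn yn) + entropy (prodW W xn) |
            <= delta * Num.sqrt (n%:R)].

Definition prodW_prob (X : Type) (Y : finType) (W : X -> Y -> R) (n : nat)
  (xn : 'I_n -> X) (A : {set {ffun 'I_n -> Y}}) : R :=
  \sum_(yn in A) prodW W xn yn.

Definition Kconst (d : nat) : R := (log2 (maxn d 3)%:R) ^+ 2.

End Defs.

(* Main.v *)
Require Import Defs.
From HB Require Import structures.
From mathcomp Require Import all_boot all_order all_algebra.
From mathcomp Require Import all_classical all_reals all_analysis.
From mathcomp Require Import lra ring.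
Import Order.TTheory GRing.Theory Num.Theory.
Local Open Scope ring_scope.

Section S.
Variable R : realType.
Implicit Types x : R.

Lemma expR_upper x : x < 1 -> expR x * (1 - x) <= 1.
Proof.
move=> hx.
have h := expR_ge1Dx (-x).
have hab := expRxMexpNx_1 x.
have ha := expR_gt0 x.
have : expR x * (1 - x) <= expR x * expR (-x) by rewrite ler_pM2l //; lra.
by rewrite hab.
Qed.

Lemma exp_quad x : expR x <= 1 + x + x^+2 * expR `|x|.
Proof.
have ha := expR_gt0 x.
case: (lerP 0 x) => hx.
  rewrite ger0_norm //.
  have h1 : 1 <= expR x by rewrite -expR0 ler_expR.
  have h2 : expR x - 1 <= x * expR x.
    have := expR_ge1Dx (-x); have := expRxMexpNx_1 x; nra.
  nra.
rewrite ltr0_norm //.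
have h3 := @expR_upper x (lt_trans hx ltr01).
have h4 := expR_ge1Dx x.
have h5 : 1 <= expR (-x) by rewrite -expR0 ler_expR; lra.
have h6 : x ^+ 2 <= x ^+ 2 * expR (- x) by rewrite ler_peMr ?sqr_ge0.
have h7 : expR x - 1 - x <= x ^+ 2 by nra.
lra.
Qed.

Lemma e_ge : 9/4 <= expR (1:R).
Proof.
have -> : (1:R) = 2%:R * (1/2) by lra.
rewrite expRM_natl.
have h := expR_ge1Dx (1/2 : R).
have : (3/2:R)^+2 <= expR (1/2) ^+ 2 by rewrite lerXn2r ?nnegrE; lra.
lra.
Qed.

Lemma e_le3 : expR (1:R) <= 3.
Proof.
have -> : (1:R) = 6%:R * (1/6) by lra.
rewrite expRM_natl.
have h : expR (1/6:R) * (1 - 1/6) <= 1 by apply: expR_upper; lra.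
have h0 := expR_gt0 (1/6:R).
have : expR (1/6:R) ^+ 6 <= (6/5)^+6 by rewrite lerXn2r ?nnegrE; lra.
lra.
Qed.

Lemma ln3_ge1 : 1 <= ln (3:R).
Proof.
rewrite -[X in X <= _]expRK ler_ln ?posrE ?expR_gt0 //; exact: e_le3.
Qed.

Lemma ln2_le : ln (2:R) <= 3/4.
Proof.
rewrite -[X in _ <= X]expRK ler_ln ?posrE ?expR_gt0 //.
have -> : (3/4:R) = 8%:R * (3/32) by lra.
rewrite expRM_natl.
have h := expR_ge1Dx (3/32 : R).
have : (35/32:R)^+8 <= expR (3/32) ^+ 8 by rewrite lerXn2r ?nnegrE; lra.
lra.
Qed.

Lemma ln2_gt0 : 0 < ln (2:R).
Proof. by apply: ln_gt0; lra. Qed.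

Lemma exp18 : expR (1/8 : R) <= 8/7.
Proof.
have h : expR (1/8:R) * (1 - 1/8) <= 1 by apply: expR_upper; lra.
lra.
Qed.


Lemma exp_lin x : expR 1 * x <= expR x.
Proof.
have -> : expR x = expR 1 * expR (x - 1) by rewrite -expRD; congr expR; lra.
rewrite ler_pM2l ?expR_gt0 //.
have := expR_ge1Dx (x - 1); lra.
Qed.

Lemma term_bound (u H l s : R) : 0 <= u -> 0 <= H -> H <= l -> 1 <= l ->
  0 <= s -> s <= 1/(24 * l) ->
  expR (-u) * (u - H)^+2 * expR (s * (u + H)) <=
  (40/7) * l^+2 * expR (-u) + (26/5) * expR (-l).
Proof.
move=> u0 H0 Hl l1 s0 sl.
have hsl : s * l <= 1/24.
  by move: sl; rewrite ler_pdivlMr ?mulr_gt0 //; try lra; nra.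
have epu := expR_gt0 (-u).
have epl := expR_gt0 (-l).
case: (lerP u (2 * l)) => hu.
  have h1 : s * (u + H) <= 1/8 by nra.
  have h2 : expR (s * (u + H)) <= 8/7.
    by apply: le_trans exp18; rewrite ler_expR.
  have h3 : (u - H)^+2 <= 5 * l^+2 by nra.
  have h4 := expR_gt0 (s * (u + H)).
  have h5 : 0 <= (u - H)^+2 by apply: sqr_ge0.
  have h6 : (u-H)^+2 * expR (s * (u + H)) <= 5 * l^+2 * (8/7).
    apply: ler_pM => //; exact: ltW.
  have h7 : expR (-u) * ((u-H)^+2 * expR (s * (u + H))) <= expR (-u) * (5 * l^+2 * (8/7)).
    by rewrite ler_pM2l.
  rewrite -mulrA; apply: (le_trans h7); nra.
have h1 : s * (u + H) <= u / 16 by nra.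
have h2 : expR (s * (u + H)) <= expR (u / 16) by rewrite ler_expR.
have h3 : (u - H)^+2 <= 5/4 * u^+2 by nra.
set q := expR (7/32 * u).
set b := expR (-(7/32 * u)).
have qb : q * b = 1 by rewrite /q /b expRxMexpNx_1.
have hq : expR 1 * (7/32 * u) <= q.
  exact: exp_lin.
have e94 := e_ge.
have bpos : 0 < b by apply: expR_gt0.
have hub : expR 1 * (7/32 * u) * b <= q * b by rewrite ler_pM2r.
rewrite qb in hub.
have E0 : 0 < expR (1:R) by apply: expR_gt0.
have hub1 : u * b <= 32/7 / expR 1.
  rewrite ler_pdivlMr //. nra.
have ub0 : 0 <= u * b by apply: mulr_ge0 => //; exact: ltW.
have hub3 : u * b <= 128/63.
  have : u * b * (9/4) <= u * b * expR 1 by rewrite ler_wpM2l.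
  move: hub1; rewrite ler_pdivlMr //; nra.
have hexp : expR (-u) * expR (u / 16) = expR (- u / 2) * b ^+ 2.
  by rewrite expr2 /b -!expRD; congr expR; lra.
have ha : expR (- u / 2) <= expR (-l) by rewrite ler_expR; lra.
have ha0 := expR_gt0 (- u / 2).
have h4 : expR (-u) * (u - H)^+2 * expR (s * (u + H)) <=
          expR (-u) * (5/4 * u^+2) * expR (u / 16).
  apply: ler_pM.
  - by apply: mulr_ge0; [exact: ltW | exact: sqr_ge0].
  - exact: expR_ge0.
  - by rewrite ler_pM2l.
  - exact: h2.
apply: le_trans h4 _.
have -> : expR (-u) * (5/4 * u^+2) * expR (u / 16) = 5/4 * expR (- u / 2) * (u * b)^+2.
  have -> : expR (-u) * (5/4 * u^+2) * expR (u / 16) = 5/4 * u^+2 * (expR (-u) * expR (u / 16)) by ring.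
  rewrite hexp; ring.
have h5 : (u * b)^+2 <= (128/63)^+2 by rewrite lerXn2r ?nnegrE //; lra.
have h6 : 0 <= l^+2 * expR (-u) by apply: mulr_ge0; [exact: sqr_ge0 | exact: ltW].
have h7 : 0 <= (u * b)^+2 by exact: sqr_ge0.
nra.
Qed.

Section Letter.
Variables (Y : finType) (p : Y -> R).
Hypothesis hp : is_pmf p.

Lemma p_le1 (y : Y) : p y <= 1.
Proof.
case: hp => h0 <-; rewrite (bigD1 y) //= lerDl; apply: sumr_ge0 => i _; exact: h0.
Qed.

Lemma L_ge0 (y : Y) : 0 <= - ln (p y).
Proof. rewrite oppr_ge0; apply: ln_le0; exact: p_le1. Qed.

Definition Hn := \sum_y p y * (- ln (p y)).

Lemma Hn_ge0 : 0 <= Hn.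
Proof. apply: sumr_ge0 => y _; apply: mulr_ge0; [exact: hp.1 | exact: L_ge0]. Qed.

Lemma cardY_gt0 : (0 < #|Y|)%N.
Proof.
rewrite lt0n; apply/eqP => c0; case: hp => _.
by rewrite big_pred0 //; [move/eqP; rewrite eq_sym oner_eq0 | exact: card0_eq].
Qed.

Lemma ln_le_sub1 (x : R) : 0 < x -> ln x <= x - 1.
Proof.
move=> x0; have := @le_ln1Dx R (x - 1).
have -> : 1 + (x - 1) = x by lra.
apply; lra.
Qed.

Lemma Hn_le : Hn <= ln (#|Y|%:R).
Proof.
set d : R := #|Y|%:R.
have d0 : 0 < d by rewrite ltr0n cardY_gt0.
have key (y : Y) : p y * (- ln (p y)) <= p y * ln d + (1/d - p y).
  have py0 := hp.1 y.
  case: (eqVneq (p y) 0) => [->|pn0]; first by rewrite !mul0r add0r subr0; apply: ltW; rewrite divr_gt0.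
  have pp : 0 < p y by rewrite lt_def pn0 py0.
  have hl := @ln_le_sub1 _ (divr_gt0 ltr01 (mulr_gt0 d0 pp)).
  rewrite ln_div ?posrE ?mulr_gt0 // ln1 lnM ?posrE // in hl.
  have : p y * (0 - (ln d + ln (p y))) <= p y * (1 / (d * p y) - 1) by rewrite ler_pM2l.
  have -> : p y * (1 / (d * p y) - 1) = 1/d - p y by field; rewrite pn0 lt0r_neq0.
  lra.
rewrite /Hn; apply: le_trans; first by apply: ler_sum => y _; exact: key.
rewrite big_split /= big_split /= -big_distrl /= sumr_const sumrN.
case: hp => _ ->; rewrite mul1r.
rewrite -mulr_natr; change (ln d + (1/d * d - 1) <= ln d).
by rewrite mul1r mulVf ?lt0r_neq0 // subrr addr0.
Qed.

Lemma lnd_le_l : ln (#|Y|%:R) <= ln ((maxn #|Y| 3)%:R : R).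
Proof.
rewrite ler_ln ?posrE ?ltr0n ?cardY_gt0 ?leq_maxr // ?ler_nat ?leq_maxl //.
by rewrite (leq_trans _ (leq_maxr _ _)).
Qed.

Lemma l_ge1 : 1 <= ln ((maxn #|Y| 3)%:R : R).
Proof.
apply: le_trans ln3_ge1 _.
rewrite ler_ln ?posrE ?ltr0n ?ler_nat ?leq_maxr //.
by rewrite (leq_trans _ (leq_maxr _ _)).
Qed.


Lemma letter_mgf (lam : R) :
  `|lam| <= 1 / (24 * ln ((maxn #|Y| 3)%:R : R)) ->
  \sum_y p y * expR (lam * (- ln (p y) - Hn)) <=
  expR (12 * lam^+2 * (ln ((maxn #|Y| 3)%:R : R))^+2).
Proof.
set l := ln _ => hlam.
have l1 : 1 <= l := l_ge1.
have H0 := Hn_ge0.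
have Hl : Hn <= l := le_trans Hn_le lnd_le_l.
set Z := fun y => - ln (p y) - Hn.
have step1 (y : Y) : p y * expR (lam * Z y) <=
    p y + lam * (p y * Z y) + lam^+2 * (p y * (Z y)^+2 * expR (`|lam| * (- ln (p y) + Hn))).
  have py0 := hp.1 y.
  have h := exp_quad (lam * Z y).
  have h' : expR `|lam * Z y| <= expR (`|lam| * (- ln (p y) + Hn)).
    rewrite ler_expR normrM ler_wpM2l //.
    have := L_ge0 y; rewrite /Z; case: (lerP 0 (- ln (p y) - Hn)) => hz.
      by rewrite ger0_norm //; lra.
    by rewrite ltr0_norm //; lra.
  have : p y * expR (lam * Z y) <= p y * (1 + lam * Z y + (lam * Z y)^+2 * expR (`|lam| * (- ln (p y) + Hn))).
    rewrite ler_wpM2l //; apply: le_trans h _.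
    by rewrite lerD2l ler_wpM2l ?sqr_ge0.
  move/le_trans; apply; rewrite le_eqVlt; apply/orP; left; apply/eqP; ring.
have sum0 : \sum_y p y * Z y = 0.
  rewrite /Z; under eq_bigr => y _ do rewrite mulrBr.
  by rewrite sumrB -big_distrl /= hp.2 mul1r subrr.
have m0 : 0 < ((maxn #|Y| 3)%:R : R) by rewrite ltr0n (leq_trans _ (leq_maxr _ _)).
have eml : expR (-l) * ((maxn #|Y| 3)%:R : R) = 1.
  by rewrite expRN /l lnK ?posrE // mulVf ?lt0r_neq0.
have step2 (y : Y) : p y * (Z y)^+2 * expR (`|lam| * (- ln (p y) + Hn)) <=
    (40/7) * l^+2 * p y + (26/5) * expR (-l).
  have py0 := hp.1 y.
  case: (eqVneq (p y) 0) => [->|pn0].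
    rewrite !mul0r mulr0 add0r; apply: mulr_ge0 => //; exact: expR_ge0.
  have pp : 0 < p y by rewrite lt_def pn0 py0.
  have pe : expR (- (- ln (p y))) = p y by rewrite opprK lnK.
  have tb := @term_bound (- ln (p y)) Hn l `|lam| (L_ge0 y) H0 Hl l1 (normr_ge0 lam) hlam.
  rewrite pe in tb; exact: tb.
have sum2 : \sum_y p y * (Z y)^+2 * expR (`|lam| * (- ln (p y) + Hn)) <= 12 * l^+2.
  apply: le_trans; first by apply: ler_sum => y _; exact: step2.
  rewrite big_split /= -big_distrr /= hp.2 mulr1 sumr_const -mulr_natr.
  change (1 * 40 / 7 * l ^+ 2 + 26 / 5 * expR (- l) *+ #|Y| <= 12 * l ^+ 2); rewrite -mulr_natr.
  have hd : (#|Y|%:R : R) <= (maxn #|Y| 3)%:R by rewrite ler_nat leq_maxl.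
  have e0 := expR_gt0 (-l).
  have : expR (-l) * #|Y|%:R <= 1 by rewrite -[X in _ <= X]eml ler_wpM2l ?expR_ge0.
  nra.
apply: le_trans; first by apply: ler_sum => y _; exact: step1.
rewrite !big_split /= -!big_distrr /= sum0 mulr0 addr0 hp.2.
have := expR_ge1Dx (12 * lam ^+ 2 * l ^+ 2).
have : lam^+2 * \sum_y p y * (Z y)^+2 * expR (`|lam| * (- ln (p y) + Hn)) <= lam^+2 * (12 * l^+2).
  by rewrite ler_wpM2l ?sqr_ge0.
lra.
Qed.
End Letter.
End S.
Section Multi.
Variable R : realType.
Variables (n : nat) (Y : finType) (p : 'I_n -> Y -> R).
Hypothesis hp : forall i, is_pmf (p i).

Definition Pn (yn : {ffun 'I_n -> Y}) : R := \prod_i p i (yn i).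

Lemma factor (F : 'I_n -> Y -> R) :
  \sum_(yn : {ffun 'I_n -> Y}) \prod_i F i (yn i) = \prod_i \sum_y F i y.
Proof. by rewrite bigA_distr_bigA. Qed.

Lemma Pn_ge0 yn : 0 <= Pn yn.
Proof. by apply: prodr_ge0 => i _; exact: (hp i).1. Qed.

Lemma sum_Pn : \sum_yn Pn yn = 1.
Proof. rewrite /Pn factor; apply: big1 => i _; exact: (hp i).2. Qed.

Lemma ln_prod (I : finType) (F : I -> R) : (forall i, 0 < F i) ->
  ln (\prod_i F i) = \sum_i ln (F i).
Proof.
move=> hF.
suff : ln (\prod_i F i) = \sum_i ln (F i) /\ 0 < \prod_i F i by case.
elim/big_rec2: _ => [|i y1 y2 _ [IH h2]]; first by rewrite ln1.
by rewrite lnM ?posrE // IH; split => //; apply: mulr_gt0.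
Qed.

Definition Ln i y := - ln (p i y).
Definition Htot := \sum_i Hn _ _ (p i).

Lemma marg (i : 'I_n) : \sum_yn Pn yn * Ln i (yn i) = Hn _ _ (p i).
Proof.
pose F (j : 'I_n) (y : Y) := if j == i then p j y * Ln j y else p j y.
have E : \sum_(yn : {ffun 'I_n -> Y}) \prod_j F j (yn j) = Hn _ _ (p i).
  rewrite factor (bigD1 i) //= [X in _ * X]big1 ?mulr1; first by rewrite /F eqxx.
  by move=> j /negbTE hj; rewrite /F hj (hp j).2.
rewrite -E; apply: eq_bigr => yn _.
rewrite /Pn (bigD1 i) //= [in RHS](bigD1 i) //= /F eqxx.
rewrite mulrAC; congr (_ * _); apply: eq_bigr => j /negbTE hj; by rewrite hj.
Qed.

Lemma entropy_Pn : entropy Pn = Htot / ln 2.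
Proof.
rewrite /entropy.
have e (yn : {ffun 'I_n -> Y}) : (if Pn yn == 0 then 0 else Pn yn * log2 (Pn yn)) =
    - (Pn yn * \sum_i Ln i (yn i)) / ln 2.
  case: (eqVneq (Pn yn) 0) => [->|hn]; first by rewrite mul0r oppr0 mul0r.
  have hpos : forall i, 0 < p i (yn i).
    move=> i; rewrite lt_def (hp i).1 andbT; apply/eqP => h0.
    by move/eqP: hn; apply; apply/eqP/prodf_eq0; exists i => //; rewrite h0.
  rewrite /log2 ln_prod // /Ln sumrN; ring.
under eq_bigr => yn _ do rewrite e.
rewrite -mulr_suml sumrN mulNr opprK /Htot.
congr (_ / _).
under eq_bigr => yn _ do rewrite mulr_sumr.
rewrite exchange_big /=; apply: eq_bigr => i _; exact: marg.
Qed.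


Definition Sn (yn : {ffun 'I_n -> Y}) := \sum_i (Ln i (yn i) - Hn _ _ (p i)).

Lemma mgf_prod (lam : R) :
  `|lam| <= 1 / (24 * ln ((maxn #|Y| 3)%:R : R)) ->
  \sum_yn Pn yn * expR (lam * Sn yn) <=
  expR (n%:R * (12 * lam^+2 * (ln ((maxn #|Y| 3)%:R : R))^+2)).
Proof.
move=> hl.
have -> : \sum_yn Pn yn * expR (lam * Sn yn) =
   \sum_(yn : {ffun 'I_n -> Y}) \prod_i (p i (yn i) * expR (lam * (Ln i (yn i) - Hn _ _ (p i)))).
  apply: eq_bigr => yn _; rewrite /Sn mulr_sumr expR_sum big_split //.
rewrite (factor (fun i y => p i y * expR (lam * (Ln i y - Hn _ _ (p i))))).
apply: (@le_trans _ _ (\prod_(i < n) expR (12 * lam^+2 * (ln ((maxn #|Y| 3)%:R : R))^+2))).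
  apply: ler_prod => i _; apply/andP; split.
    by apply: sumr_ge0 => y _; apply: mulr_ge0; [exact: (hp i).1 | exact: expR_ge0].
  rewrite /Ln; exact: (@letter_mgf _ _ _ (hp i) lam hl).
by rewrite prodr_const card_ord expRM_natl.
Qed.

Lemma tail (t lam : R) : 0 <= lam ->
  \sum_(yn | t < `|Sn yn|) Pn yn <=
  expR (- (lam * t)) * (\sum_yn Pn yn * expR (lam * Sn yn) + \sum_yn Pn yn * expR ((- lam) * Sn yn)).
Proof.
move=> l0.
rewrite -big_split /= mulr_sumr big_mkcond /=.
apply: ler_sum => yn _.
have P0 := Pn_ge0 yn.
have e1 := expR_gt0 (lam * Sn yn).
have e2 := expR_gt0 (- lam * Sn yn).
have e3 := expR_gt0 (- (lam * t)).
case: ifP => ht; last first.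
  by apply: mulr_ge0; [exact: ltW | apply: addr_ge0; apply: mulr_ge0 => //; exact: ltW].
have key : 1 <= expR (- (lam * t)) * (expR (lam * Sn yn) + expR (- lam * Sn yn)).
  rewrite mulrDr -!expRD.
  case: (lerP 0 (Sn yn)) => hs.
    rewrite ger0_norm // in ht.
    have : 1 <= expR (- (lam * t) + lam * Sn yn) by rewrite -expR0 ler_expR; nra.
    have := expR_gt0 (- (lam * t) + - lam * Sn yn); lra.
  rewrite ltr0_norm // in ht.
  have : 1 <= expR (- (lam * t) + - lam * Sn yn) by rewrite -expR0 ler_expR; nra.
  have := expR_gt0 (- (lam * t) + lam * Sn yn); lra.
have -> : expR (- (lam * t)) * (Pn yn * expR (lam * Sn yn) + Pn yn * expR (- lam * Sn yn))
  = Pn yn * (expR (- (lam * t)) * (expR (lam * Sn yn) + expR (- lam * Sn yn))) by ring.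
by rewrite ler_peMr.
Qed.

End Multi.

Theorem lemma1 (R : realType) (d : measure_display) (X : measurableType d)
  (Y : finType) (W : X -> Y -> R)
  (HWpmf : forall x, is_pmf (W x))
  (HWmeas : forall y, measurable_fun setT (fun x => W x y))
  (n : nat) (delta : R)
  (Hdelta0 : 0 < delta)
  (Hdelta1 : delta <= Num.sqrt (n%:R) * log2 (#|Y|%:R))
  (xn : 'I_n -> X) :
  prodW_prob W xn (typical_set W delta xn)
    >= 1 - 2 * exp2 (- (delta ^+ 2 / (36 * Kconst R #|Y|))).
Proof.
pose p i := W (xn i).
have hp : forall i, is_pmf (p i) by move=> i; exact: HWpmf.
set l := ln ((maxn #|Y| 3)%:R : R).
have l1 : 1 <= l := l_ge1 R Y.
set r := Num.sqrt (n%:R : R).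
have r0 : 0 <= r := sqrtr_ge0 _.
have rr : r ^+ 2 = n%:R by rewrite sqr_sqrtr ?ler0n.
have ln2p := ln2_gt0 R.
have ln2l := ln2_le R.
have n0 : 0 < r.
  rewrite lt_def r0 andbT; apply/eqP => h0; move: Hdelta1; rewrite -/r h0 mul0r; lra.
have nR : 0 < (n%:R : R) by rewrite -rr exprn_gt0.
set t := delta * r * ln 2.
have nN : (0 < n)%N by rewrite -(ltr0n R).
have lnd := lnd_le_l _ _ _ (HWpmf (xn (Ordinal nN))).
have tnl : t <= n%:R * l.
  move: Hdelta1; rewrite -/r /log2 => hd.
  have : t <= r * (r * (ln (#|Y|%:R : R) / ln 2)) * ln 2.
    by rewrite /t ler_pM2r // [delta * r]mulrC ler_pM2l.
  have -> : r * (r * (ln (#|Y|%:R : R) / ln 2)) * ln 2 = r^+2 * ln (#|Y|%:R : R).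
    by field; rewrite lt0r_neq0.
  rewrite rr => h; apply: (le_trans h); rewrite ler_pM2l //.
have t0 : 0 <= t by rewrite /t; apply: mulr_ge0; [apply: mulr_ge0 | ]; apply: ltW.
set lam := t / (24 * n%:R * l^+2).
have l0 : 0 < l by lra.
have lam0 : 0 <= lam by rewrite /lam; apply: divr_ge0 => //; apply: ltW; rewrite !mulr_gt0 // exprn_gt0.
have laml : `|lam| <= 1 / (24 * l).
  rewrite ger0_norm // /lam ler_pdivrMr ?mulr_gt0 ?exprn_gt0 //.
  have -> : 1 / (24 * l) * (24 * n%:R * l ^+ 2) = n%:R * l by field; rewrite lt0r_neq0.
  exact: tnl.
have mlam : `|- lam| <= 1 / (24 * l) by rewrite normrN.
have M1 := mgf_prod _ _ _ _ hp _ laml.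
have M2 := mgf_prod _ _ _ _ hp _ mlam.
have T := tail _ _ _ _ hp t _ lam0.
have rel (yn : {ffun 'I_n -> Y}) : 0 < Pn R n Y p yn ->
    log2 (prodW W xn yn) + entropy (prodW W xn) = - Sn R n Y p yn / ln 2.
  move=> hpos.
  have hpi : forall i, 0 < p i (yn i).
    move=> i; rewrite lt_def (hp i).1 andbT; apply/eqP => h0.
    move: hpos; rewrite lt_def => /andP [/eqP hn _]; apply: hn.
    by apply/eqP/prodf_eq0; exists i => //; rewrite h0.
  change (log2 (Pn R n Y p yn) + entropy (Pn R n Y p) = - Sn R n Y p yn / ln 2).
  rewrite entropy_Pn // /log2 /Pn ln_prod // /Sn sumrB /Ln sumrN /Htot.
  field; rewrite lt0r_neq0 //.
have comp : 1 - prodW_prob W xn (typical_set W delta xn) <=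
    \sum_(yn | t < `|Sn R n Y p yn|) Pn R n Y p yn.
  rewrite -(sum_Pn _ _ _ _ hp) (bigID (fun yn => yn \in typical_set W delta xn)) /=.
  rewrite /prodW_prob addrC addrK big_mkcond [X in _ <= X]big_mkcond /=.
  apply: ler_sum => yn _.
  have P0 := Pn_ge0 _ _ _ _ hp yn.
  case: ifP => hT; last by case: ifP.
  case: (eqVneq (Pn R n Y p yn) 0) => [->|pn0]; first by case: ifP.
  have pp : 0 < Pn R n Y p yn by rewrite lt_def pn0 P0.
  have h : delta * r < `|log2 (prodW W xn yn) + entropy (prodW W xn)|.
    by move: hT; rewrite inE -/r ltNge.
  rewrite rel // normrM normrN ger0_norm ?invr_ge0 ?ltW // in h.
  rewrite ifT // /t -ltr_pdivlMr //.
set a := delta ^+ 2 * (ln 2) ^+ 2 / l ^+ 2.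
have a0 : 0 <= a by rewrite /a; apply: divr_ge0; [apply: mulr_ge0|]; apply: sqr_ge0.
have E1 : - (lam * t) + n%:R * (12 * lam ^+ 2 * l ^+ 2) = - (a / 48).
  rewrite /a /lam /t -rr; field; rewrite !lt0r_neq0 //.
have B : \sum_(yn | t < `|Sn R n Y p yn|) Pn R n Y p yn <= 2 * expR (- (a / 48)).
  apply: (le_trans T); rewrite sqrrN in M2.
  have e0 := expR_gt0 (- (lam * t)).
  have : expR (- (lam * t)) * (\sum_yn Pn R n Y p yn * expR (lam * Sn R n Y p yn) +
      \sum_yn Pn R n Y p yn * expR (- lam * Sn R n Y p yn)) <=
      expR (- (lam * t)) * (2 * expR (n%:R * (12 * lam ^+ 2 * l ^+ 2))).
    rewrite ler_pM2l //; lra.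
  move/le_trans; apply.
  by rewrite mulrCA -expRD E1.
have ex2 : exp2 (- (delta ^+ 2 / (36 * Kconst R #|Y|))) = expR (- (a * ln 2 / 36)).
  rewrite /exp2 /powR (negbTE (_ : (2:R) != 0)) ?pnatr_eq0 //.
  congr expR; rewrite /Kconst /log2 -/l /a; field; rewrite !lt0r_neq0 //.
rewrite ex2.
have : expR (- (a / 48)) <= expR (- (a * ln 2 / 36)) by rewrite ler_expR; nra.
lra.
Qed.
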